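(* Let $A$ be a Noetherian commutative ring with identity, let $A[\mathbf{x}]=A[x_1,\ldots,x_n]$ be equipped with a monomial order, let $I\subset A[\mathbf{x}]$ be an ideal, let $M=A[\mathbf{x}]/I$, and let $p\subset A$ be a prime ideal. The following two statements are equivalent: (a) the natural map $f:A_p\to M_p$ is a finite map (i.e. $M_p$ is a finitely generated $A_p$-module); (b) $\mathrm{in}(I)_{x_i^\infty}\,A_p=(1)$ for each $i=1,\ldots,n$.
   Context: A monomial order $>$ is a total order on monomials such that $\mathbf{x}^E>\mathbf{x}^F$ implies $\mathbf{x}^G\mathbf{x}^E>\mathbf{x}^G\mathbf{x}^F$, and $x_i>1$ for each $i$. $\mathrm{in}(f)$ is the greatest term $c\,\mathbf{x}^E$ ($c\neq0$) of a nonzero polynomial $f$; $\mathrm{in}(I)$ is the ideal generated by all $\mathrm{in}(f)$, $f\in I$. For an ideal $J\subset A[\mathbf{x}]$ and monomial $\mathbf{x}^E$, the coefficient ideal is $J_{\mathbf{x}^E}=(c\in A\mid c\,\mathbf{x}^E\in J)\subset A$. $\mathrm{in}(I)_{x_i^\infty}$ denotes the stationary limit (union) of the ascending chain of ideals $\mathrm{in}(I)_{x_i}\subset\mathrm{in}(I)_{x_i^2}\subset\cdots$ of $A$. *)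

(* Defs.v *)
From HB Require Import structures.
From mathcomp Require Import all_boot all_order all_algebra.
From mathcomp Require Import mpoly.
Set Implicit Arguments. Unset Strict Implicit. Unset Printing Implicit Defensive.
Import Order.TTheory GRing.Theory.
Local Open Scope ring_scope.

Definition is_ideal (R : comNzRingType) (J : R -> Prop) : Prop :=
  [/\ J 0, (forall x y, J x -> J y -> J (x + y)) & (forall r x, J x -> J (r * x))].

Definition ideal_gen (R : comNzRingType) (S : R -> Prop) (x : R) : Prop :=
  exists k (r g : 'I_k -> R), (forall i, S (g i)) /\ x = \sum_(i < k) r i * g i.

Definition is_prime_ideal (R : comNzRingType) (p : R -> Prop) : Prop :=
  [/\ is_ideal p, ~ p 1 & (forall a b, p (a * b) -> p a \/ p b)].

Definition noetherian (R : comNzRingType) : Prop :=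
  forall J : R -> Prop, is_ideal J ->
    exists s : seq R, forall x, J x <-> ideal_gen (fun y => y \in s) x.

(* monomials x^E are represented by multinomials E : 'X_{1..n};
   x^E x^F = x^(E+F), 1 = x^0, x_i = x^(U_i) *)
Definition monomial_order (n : nat) (le : rel 'X_{1..n}) : Prop :=
  [/\ reflexive le, transitive le, antisymmetric le & total le] /\
  (forall E F G : 'X_{1..n}, le E F -> le (G + E)%MM (G + F)%MM) /\
  (forall i : 'I_n, le 0%MM (mnm1 i) /\ 0%MM != mnm1 i).

Section Initial.
Variables (A : comNzRingType) (n : nat) (le : rel 'X_{1..n}).

Definition is_lead_mon (f : {mpoly A[n]}) (E : 'X_{1..n}) : Prop :=
  E \in msupp f /\ (forall F, F \in msupp f -> le F E).

Definition is_initial_term (f g : {mpoly A[n]}) : Prop :=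
  f != 0 /\ exists E, is_lead_mon f E /\ g = f@_E *: 'X_[E].

Definition initial_ideal (I : {mpoly A[n]} -> Prop) : {mpoly A[n]} -> Prop :=
  ideal_gen (fun g => exists f, I f /\ is_initial_term f g).

Definition coef_ideal (J : {mpoly A[n]} -> Prop) (E : 'X_{1..n}) : A -> Prop :=
  fun c => J (c *: 'X_[E]).

Definition initial_coef_ideal_inf (I : {mpoly A[n]} -> Prop) (i : 'I_n) : A -> Prop :=
  fun c => exists k : nat, coef_ideal (initial_ideal I) (mnm1 i *+ k.+1)%MM c.
End Initial.

(* For an A-module V and a submodule N, the localization (V/N)_p consists of
   fractions v/s (v : V, s : A, s ∉ p), with v/s = w/t iff u (t v - s w) ∈ N for
   some u ∉ p.  A_p is the case V = A (regular module), N = 0. *)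
Section Loc.
Variables (A : comNzRingType) (V : lmodType A).

Definition fr_add (x y : V * A) : V * A := (y.2 *: x.1 + x.2 *: y.1, x.2 * y.2).
Definition fr_zero : V * A := (0, 1).
(* action of a/t ∈ A_p on v/s *)
Definition fr_scale (c : A * A) (x : V * A) : V * A := (c.1 *: x.1, c.2 * x.2).
Definition fr_eq (p : A -> Prop) (N : V -> Prop) (x y : V * A) : Prop :=
  exists u, ~ p u /\ N ((u * y.2) *: x.1 - (u * x.2) *: y.1).

Definition loc_fin_gen (p : A -> Prop) (N : V -> Prop) : Prop :=
  exists k (g : 'I_k -> V * A), (forall i, ~ p (g i).2) /\
    forall x : V * A, ~ p x.2 ->
      exists c : 'I_k -> A * A, (forall i, ~ p (c i).2) /\
        fr_eq p N x (\big[fr_add/fr_zero]_(i < k) fr_scale (c i) (g i)).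
End Loc.

(* J A_p = (1): the ideal of A_p generated by the images j/1 (j ∈ J) contains 1/1 *)
Definition ext_loc_unit (A : comNzRingType) (p : A -> Prop) (J : A -> Prop) : Prop :=
  exists k (c : 'I_k -> A * A) (j : 'I_k -> A),
    (forall i, ~ p (c i).2) /\ (forall i, J (j i)) /\
    fr_eq (V := A^o) p (fun v => v = 0) (1, 1)
      (\big[@fr_add A A^o/fr_zero A^o]_(i < k) fr_scale (c i) ((j i : A^o), 1)).

(* Main.v *)
Require Import Defs.
From HB Require Import structures.
From mathcomp Require Import all_boot all_order all_algebra.
From mathcomp Require Import mpoly.
From Stdlib Require Import Classical ClassicalEpsilon.
Set Implicit Arguments. Unset Strict Implicit. Unset Printing Implicit Defensive.
Import Order.TTheory GRing.Theory.
Local Open Scope ring_scope.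


Lemma ex_min_nat (g : nat -> nat) (Q : nat -> Prop) :
  (exists j, Q j) -> exists j, Q j /\ forall j', Q j' -> (g j <= g j')%N.
Proof.
case=> j0 Qj0.
suff: forall v, (exists j, Q j /\ (g j <= v)%N) ->
  exists j, Q j /\ forall j', Q j' -> (g j <= g j')%N.
  by apply; exists j0; split.
elim=> [|v IH].
  case=> j [Qj]; rewrite leqn0 => /eqP gj; exists j; split => // j' _.
  by rewrite gj.
case=> j [Qj gj].
case: (classic (exists j, Q j /\ (g j <= v)%N)) => [/IH //|H].
exists j; split => // j' Qj'.
case: (leqP (g j') v) => [hv|hv]; first by exfalso; apply: H; exists j'.
exact: leq_trans gj hv.
Qed.

Lemma sub_nondec (g : nat -> nat) : exists phi : nat -> nat,
  (forall k, (phi k < phi k.+1)%N) /\ (forall k, (g (phi k) <= g (phi k.+1))%N).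
Proof.
have H a : exists j, (a < j)%N /\ forall j', (a < j')%N -> (g j <= g j')%N.
  by apply: ex_min_nat; exists a.+1.
have [nx Hnx] : exists nx : nat -> nat, forall a, (a < nx a)%N /\
    forall j', (a < j')%N -> (g (nx a) <= g j')%N.
  exists (fun a => proj1_sig (constructive_indefinite_description _ (H a))).
  by move=> a; case: (constructive_indefinite_description _ (H a)).
exists (fun k => iter k.+1 nx 0%N) => /=; split => k.
  by case: (Hnx (iter k.+1 nx 0%N)).
case: (Hnx (iter k nx 0%N)) => lt1 mn; apply: mn.
by apply: (ltn_trans lt1); case: (Hnx (iter k.+1 nx 0%N)).
Qed.

Lemma dickson_gen n (f : nat -> 'X_{1..n}) (s : seq 'I_n) : exists phi : nat -> nat,
  (forall k, (phi k < phi k.+1)%N) /\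
  (forall k c, c \in s -> (f (phi k) c <= f (phi k.+1) c)%N).
Proof.
elim: s => [|c s [phi [Hphi Hf]]].
  by exists id; split => // k c.
have [psi [Hpsi Hg]] := sub_nondec (fun k => f (phi k) c).
exists (fun k => phi (psi k)); split => k.
  exact: (homo_ltn ltn_trans Hphi (Hpsi k)).
move=> d; rewrite inE => /orP [/eqP -> //|ds].
have := homo_leq (f := fun k => f (phi k) d) (r := leq) (@leqnn) (@leq_trans) (fun k => Hf k d ds).
by apply; apply: ltnW; apply: Hpsi.
Qed.

Lemma dickson n (f : nat -> 'X_{1..n}) : exists i j, (i < j)%N /\ (f i <= f j)%MM.
Proof.
have [phi [H1 H2]] := dickson_gen f (enum 'I_n).
exists (phi 0%N), (phi 1%N); split => //.
by apply/mnm_lepP => c; apply: H2; rewrite mem_enum.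
Qed.

Lemma mo_le0 n (le : rel 'X_{1..n}) : monomial_order le -> forall E, le 0%MM E.
Proof.
case=> [[rf tr _ _] [cp U]] E.
have st : forall c E, le E (E + U_(c))%MM.
  move=> c E'; have := cp 0%MM U_(c)%MM E' (proj1 (U c)); by rewrite addm0.
move: {2}(mdeg E) (erefl (mdeg E)) => d; elim: d E => [|d IH] E hE.
  by move/eqP: hE; rewrite mdeg_eq0 => /eqP ->; apply: rf.
have [c Ec] : exists c, (E c != 0)%N.
  apply: NNPP => H; move: hE; rewrite mdegE big1 //.
  move=> c _; case: (eqVneq (E c) 0%N) => // h; exfalso; apply: H; by exists c.
have le1 : (U_(c) <= E)%MM by rewrite lep1mP.
rewrite -(submK le1); apply: (tr _ _ _ (IH _ _) (st _ _)).
by move: hE; rewrite -{1}(submK le1) mdegD mdeg1 addn1 => [[]].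
Qed.

Lemma mo_lem n (le : rel 'X_{1..n}) : monomial_order le -> forall E F, (E <= F)%MM -> le E F.
Proof.
move=> mo E F EF; rewrite -(submK EF) addmC.
have := (proj1 (proj2 mo)) 0%MM (F - E)%MM E (mo_le0 mo _).
by rewrite addm0.
Qed.

Lemma mo_wf n (le : rel 'X_{1..n}) (P : 'X_{1..n} -> Prop) : monomial_order le ->
  (forall F, (forall G, le G F -> G != F -> P G) -> P F) -> forall F, P F.
Proof.
move=> mo IH F0; apply: NNPP => nP0.
have step : forall F : {F | ~ P F}, exists G : {F | ~ P F},
    le (proj1_sig G) (proj1_sig F) /\ proj1_sig G != proj1_sig F.
  case=> F nPF /=; apply: NNPP => H; apply: nPF; apply: IH => G lGF nGF.
  apply: NNPP => nPG; apply: H; by exists (exist _ G nPG).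
have [nx Hnx] : exists nx : {F | ~ P F} -> {F | ~ P F}, forall F,
    le (proj1_sig (nx F)) (proj1_sig F) /\ proj1_sig (nx F) != proj1_sig F.
  exists (fun F => proj1_sig (constructive_indefinite_description _ (step F))).
  by move=> F; case: (constructive_indefinite_description _ (step F)).
pose sq k := proj1_sig (iter k nx (exist _ F0 nP0)).
have [[rf tr an _] _] := mo.
have dec : forall i j, (i < j)%N -> le (sq j) (sq i) /\ sq j != sq i.
  move=> i j /subnKC <-; elim: (j - i.+1)%N => [|d [IH1 IH2]].
    by rewrite addn0; apply: Hnx.
  rewrite addnS; have [h1 h2] := Hnx (iter (i.+1 + d) nx (exist _ F0 nP0)).
  split; first exact: tr h1 IH1.
  apply/negP => /eqP e; move: h2 h1; rewrite /sq /= in e IH1 IH2 *.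
  rewrite e => h2 h1.
  have e' : proj1_sig (iter (i.+1 + d) nx (exist _ F0 nP0)) = sq i.
    by apply: an; rewrite h1 IH1.
  by move: IH2; rewrite /sq e' eqxx.
have [i [j [ij lij]]] := dickson sq.
have [h1 h2] := dec i j ij.
by move: h2; rewrite (an (sq j) (sq i)) ?eqxx // h1 /= (mo_lem mo lij).
Qed.


Lemma idealD (R : comNzRingType) (J : R -> Prop) : is_ideal J -> forall x y, J x -> J y -> J (x + y).
Proof. by case. Qed.
Lemma ideal0 (R : comNzRingType) (J : R -> Prop) : is_ideal J -> J 0.
Proof. by case. Qed.
Lemma idealM (R : comNzRingType) (J : R -> Prop) : is_ideal J -> forall r x, J x -> J (r * x).
Proof. by case. Qed.
Lemma idealMr (R : comNzRingType) (J : R -> Prop) : is_ideal J -> forall r x, J x -> J (x * r).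
Proof. by move=> h r x Jx; rewrite mulrC; apply: idealM. Qed.
Lemma idealN (R : comNzRingType) (J : R -> Prop) : is_ideal J -> forall x, J x -> J (- x).
Proof. by move=> h x Jx; rewrite -mulN1r; apply: idealM. Qed.
Lemma idealB (R : comNzRingType) (J : R -> Prop) : is_ideal J -> forall x y, J x -> J y -> J (x - y).
Proof. by move=> h x y Jx Jy; apply: idealD => //; apply: idealN. Qed.
Lemma ideal_sum (R : comNzRingType) (J : R -> Prop) (T : Type) (r : seq T) (P : pred T) (F : T -> R) :
  is_ideal J -> (forall i, P i -> J (F i)) -> J (\sum_(i <- r | P i) F i).
Proof.
move=> h HF; elim: r => [|x r IH]; first by rewrite big_nil; apply: ideal0.
rewrite big_cons; case: ifP => // Px; apply: idealD => //; exact: HF.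
Qed.
Lemma idealZ (A : comNzRingType) n (J : {mpoly A[n]} -> Prop) : is_ideal J ->
  forall (c : A) x, J x -> J (c *: x).
Proof. by move=> h c x Jx; rewrite -mul_mpolyC; apply: idealM. Qed.

Lemma primeM (A : comNzRingType) (p : A -> Prop) : is_prime_ideal p ->
  forall a b, ~ p a -> ~ p b -> ~ p (a * b).
Proof. by case=> _ _ h a b ha hb /h [] . Qed.
Lemma primeX (A : comNzRingType) (p : A -> Prop) : is_prime_ideal p ->
  forall a k, ~ p a -> ~ p (a ^+ k).
Proof.
move=> hp a k ha; elim: k => [|k IH]; first by rewrite expr0; case: hp.
by rewrite exprS; apply: primeM.
Qed.
Lemma prime_prod (A : comNzRingType) (p : A -> Prop) (T : Type) (r : seq T) (F : T -> A) :
  is_prime_ideal p -> (forall i, ~ p (F i)) -> ~ p (\prod_(i <- r) F i).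
Proof.
move=> hp HF; elim: r => [|x r IH]; first by rewrite big_nil; case: hp.
by rewrite big_cons; apply: primeM.
Qed.
Lemma prime_neq0 (A : comNzRingType) (p : A -> Prop) : is_prime_ideal p ->
  forall a, ~ p a -> a != 0.
Proof. by case=> [[h0 _ _] _ _] a ha; apply/eqP => e; apply: ha; rewrite e. Qed.

Lemma mcoeffMX_gen (A : comNzRingType) n (q : {mpoly A[n]}) (m E : 'X_{1..n}) :
  (q * 'X_[m])@_E = if (m <= E)%MM then q@_(E - m)%MM else 0.
Proof.
case: ifP => h.
  by rewrite -{1}(submK h) addmC mcoeffMX.
apply/eqP; rewrite mcoeff_eq0; apply/negP.
rewrite (perm_mem (msuppMX q m)) => /mapP [m' _ e].
by move: h; rewrite e lem_addr.
Qed.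

Lemma msuppMX_le (A : comNzRingType) n (q : {mpoly A[n]}) (m F : 'X_{1..n}) :
  F \in msupp (q * 'X_[m]) -> exists2 G, G \in msupp q & F = (m + G)%MM.
Proof.
by rewrite (perm_mem (msuppMX q m)) => /mapP [G hG ->]; exists G.
Qed.

Definition bnd (A : comNzRingType) n (le : rel 'X_{1..n}) (E : 'X_{1..n}) (g : {mpoly A[n]}) :=
  forall F, ~~ le F E -> g@_F = 0.

Lemma coef_initial (A : comNzRingType) n (le : rel 'X_{1..n}) (I : {mpoly A[n]} -> Prop)
  (E : 'X_{1..n}) (q : {mpoly A[n]}) :
  monomial_order le -> is_ideal I -> initial_ideal le I q ->
  exists g, [/\ I g, g@_E = q@_E & bnd le E g].
Proof.
move=> mo hI [k [r [t [Ht ->]]]].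
have [[rf tr an to] [cp U]] := mo.
pose C (a : A) := exists g, [/\ I g, g@_E = a & bnd le E g].
have C0 : C 0 by exists 0; split => //; [exact: ideal0| rewrite mcoeff0| move=> F _; rewrite mcoeff0].
have CD : forall a b, C a -> C b -> C (a + b).
  move=> a b [g1 [I1 e1 b1]] [g2 [I2 e2 b2]]; exists (g1 + g2); split.
  - exact: idealD.
  - by rewrite mcoeffD e1 e2.
  - by move=> F hF; rewrite mcoeffD b1 ?b2 ?addr0.
rewrite raddf_sum /=.
elim: k r t Ht => [|k IH] r t Ht; first by rewrite big_ord0.
rewrite big_ord_recr /=; apply: CD; first by apply: IH => i; apply: Ht.
have [f [If [fn0 [E' [[E'in E'max] ->]]]]] := Ht ord_max.
rewrite -scalerAr mcoeffZ mcoeffMX_gen.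
case: ifP => hE'; last first.
  by rewrite mulr0.
exists ((r ord_max)@_(E - E')%MM *: (f * 'X_[E - E'])); split.
- by apply: idealZ => //; apply: idealMr.
- by rewrite mcoeffZ mcoeffMX_gen lem_subr submBA // addmC addmK mulrC.
- move=> F hF; rewrite mcoeffZ; apply/eqP; rewrite (_ : (f * _)@_F = 0) ?mulr0 //.
  apply/eqP; rewrite mcoeff_eq0; apply/negP => /msuppMX_le [G hG eF].
  move: hF; rewrite eF; apply/negP/negPn.
  have := cp G E' (E - E')%MM (E'max G hG).
  by rewrite submK.
Qed.


Definition Good (A : comNzRingType) n (I : {mpoly A[n]} -> Prop) (p : A -> Prop) (d : nat)
  (v : {mpoly A[n]}) :=
  exists u, ~ p u /\ exists w : {mpoly A[n]}, (msize w <= d)%N /\ I (u *: v - w).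

Lemma Good0 (A : comNzRingType) n (I : {mpoly A[n]} -> Prop) (p : A -> Prop) d :
  is_ideal I -> is_prime_ideal p -> Good I p d 0.
Proof.
move=> hI hp; exists 1; split; first by case: hp.
by exists 0; rewrite msize0 scaler0 subr0; split => //; apply: ideal0.
Qed.

Lemma GoodD (A : comNzRingType) n (I : {mpoly A[n]} -> Prop) (p : A -> Prop) d v1 v2 :
  is_ideal I -> is_prime_ideal p -> Good I p d v1 -> Good I p d v2 -> Good I p d (v1 + v2).
Proof.
move=> hI hp [u1 [pu1 [w1 [s1 i1]]]] [u2 [pu2 [w2 [s2 i2]]]].
exists (u1 * u2); split; first exact: primeM.
exists (u2 *: w1 + u1 *: w2); split.
  apply: leq_trans (msizeD_le _ _) _; rewrite geq_max.
  by rewrite !(leq_trans (msizeZ_le _ _)).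
have -> : (u1 * u2) *: (v1 + v2) - (u2 *: w1 + u1 *: w2) =
   u2 *: (u1 *: v1 - w1) + u1 *: (u2 *: v2 - w2).
  by rewrite !scalerBr !scalerA !scalerDr [u2 * u1]mulrC; rewrite addrACA opprD.
by apply: idealD => //; apply: idealZ.
Qed.

Lemma GoodZ (A : comNzRingType) n (I : {mpoly A[n]} -> Prop) (p : A -> Prop) d (c : A) v :
  is_ideal I -> Good I p d v -> Good I p d (c *: v).
Proof.
move=> hI [u [pu [w [s i]]]]; exists u; split => //; exists (c *: w); split.
  exact: leq_trans (msizeZ_le _ _) s.
by rewrite scalerA mulrC -scalerA -scalerBr; apply: idealZ.
Qed.

Lemma Good_sum (A : comNzRingType) n (I : {mpoly A[n]} -> Prop) (p : A -> Prop) d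
  (T : Type) (r : seq T) (F : T -> {mpoly A[n]}) :
  is_ideal I -> is_prime_ideal p -> (forall i, Good I p d (F i)) ->
  Good I p d (\sum_(i <- r) F i).
Proof.
move=> hI hp; elim: r => [|x r IH] H; first by rewrite big_nil; apply: Good0.
by rewrite big_cons; apply: GoodD => //; apply: IH.
Qed.

Lemma GoodI (A : comNzRingType) n (I : {mpoly A[n]} -> Prop) (p : A -> Prop) d v v' :
  is_ideal I -> I (v' - v) -> Good I p d v -> Good I p d v'.
Proof.
move=> hI hv [u [pu [w [s i]]]]; exists u; split => //; exists w; split => //.
have -> : u *: v' - w = u *: (v' - v) + (u *: v - w).
  by rewrite scalerBr addrA subrK.
by apply: idealD => //; apply: idealZ.
Qed.

Lemma Good_unZ (A : comNzRingType) n (I : {mpoly A[n]} -> Prop) (p : A -> Prop) d (c : A) v :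
  is_prime_ideal p -> ~ p c -> Good I p d (c *: v) -> Good I p d v.
Proof.
move=> hp pc [u [pu [w [s i]]]]; exists (u * c); split; first exact: primeM.
by exists w; split => //; rewrite -scalerA.
Qed.

Lemma Good_all (A : comNzRingType) n (le : rel 'X_{1..n}) (I : {mpoly A[n]} -> Prop)
  (p : A -> Prop) (kk : 'I_n -> nat) (c : 'I_n -> A) (g : 'I_n -> {mpoly A[n]}) :
  monomial_order le -> is_ideal I -> is_prime_ideal p ->
  (forall j, [/\ I (g j), (g j)@_(U_(j) *+ kk j)%MM = c j, ~ p (c j) &
       bnd le (U_(j) *+ kk j)%MM (g j)]) ->
  forall v, Good I p (\sum_j kk j).+1 v.
Proof.
move=> mo hI hp Hg.
have [[rf tr an to] [cp U]] := mo.
set d := (\sum_j kk j).+1.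
suff HX : forall F, Good I p d 'X_[F].
  move=> v; rewrite (mpolyE v); apply: Good_sum => // m; apply: GoodZ => //.
apply: (mo_wf (P := fun F => Good I p d 'X_[F]) mo) => F IH.
case: (ltnP (mdeg F) d) => hF.
  exists 1; split; first by case: hp.
  exists 'X_[F]; split; first by rewrite msizeX.
  by rewrite scale1r subrr; apply: ideal0.
have [j hj] : exists j, (kk j <= F j)%N.
  apply: NNPP => H; move: hF; rewrite /d mdegE ltnNge => /negP; apply.
  apply: leq_sum => j _; apply: ltnW; rewrite ltnNge; apply/negP => hj.
  by apply: H; exists j.
set K := (U_(j) *+ kk j)%MM.
have KF : (K <= F)%MM.
  apply/mnm_lepP => i; rewrite /K mulmnE mnm1E.
  by case: eqP => [<-|_]; rewrite ?mul1n ?mul0n.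
set F' := (F - K)%MM.
have eF : F = (F' + K)%MM by rewrite /F' submK.
have [Ig gc pc bg] := Hg j.
set h := g j - c j *: 'X_[K].
have Gh : Good I p d ('X_[F'] * h).
  rewrite (mpolyE h) mulr_sumr; apply: Good_sum => // G.
  case: (boolP (G \in msupp h)) => hG; last first.
    by rewrite (memN_msupp_eq0 hG) scale0r mulr0; apply: Good0.
  rewrite -scalerAr -mpolyXD; apply: GoodZ => //.
  have hG' : le G K /\ G != K.
    move: hG; rewrite mcoeff_msupp /h mcoeffB mcoeffZ mcoeffX.
    case: (eqVneq G K) => [->|nGK]; first by rewrite gc mulr1 subrr eqxx.
    rewrite mulr0 subr0 => hg; split => //.
    by apply: NNPP => H; move: hg; rewrite bg ?eqxx //; apply/negP.
  case: hG' => h1 h2; apply: IH; rewrite eF; first exact: (cp _ _ F' h1).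
  by rewrite eqm_add2l.
have Gc : Good I p d (c j *: 'X_[F]).
  apply: (GoodI (v := - ('X_[F'] * h))) => //.
    have -> : c j *: 'X_[F] - - ('X_[F'] * h) = 'X_[F'] * g j.
      by rewrite opprK /h mulrBr -scalerAr -mpolyXD -eF addrC subrK.
    exact: idealM.
  by rewrite -scaleN1r; apply: GoodZ.
exact: Good_unZ Gc.
Qed.


Lemma fchoice (T X : Type) (P : T -> X -> Prop) :
  (forall i, exists x, P i x) -> exists f : T -> X, forall i, P i (f i).
Proof.
move=> H; exists (fun i => proj1_sig (constructive_indefinite_description _ (H i))).
by move=> i; case: (constructive_indefinite_description _ (H i)).
Qed.

Lemma fr_sum_const (A : comNzRingType) (V : lmodType A) k (a : 'I_k -> A) (vv : 'I_k -> V) (d : A) :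
  \big[@fr_add A V/fr_zero V]_(i < k) fr_scale (a i, d) (vv i, 1) =
  (d ^+ k.-1 *: \sum_i a i *: vv i, d ^+ k).
Proof.
elim: k a vv => [|k IH] a vv; first by rewrite big_ord0 /fr_zero big_ord0 expr0 scaler0.
rewrite big_ord_recl IH big_ord_recl /fr_add /fr_scale /= mulr1.
case: k a vv IH => [|k] a vv IH.
  by rewrite big_ord0 !scaler0 !addr0 mulr1 expr1.
by rewrite /= scalerDr scalerA -!exprS [d *: (_ *: _)]scalerA -exprS.
Qed.

Lemma fr_sum_p (A : comNzRingType) (p : A -> Prop) k (F : 'I_k -> A^o * A) :
  is_prime_ideal p -> (forall i, ~ p (F i).2) ->
  ~ p (\big[@fr_add A A^o/fr_zero A^o]_(i < k) F i).2 /\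
  ((forall i, p (F i).1) -> p (\big[@fr_add A A^o/fr_zero A^o]_(i < k) F i).1).
Proof.
move=> hp; have [[p0 pD pM] p1 _] := hp.
elim: k F => [|k IH] F HF; first by rewrite big_ord0.
rewrite big_ord_recl /=.
have [h1 h2] := IH (fun i => F (lift ord0 i)) (fun i => HF _).
split; first exact: primeM.
move=> H; apply: pD; apply: pM => //.
by apply: h2 => i.
Qed.

Lemma ext_loc_unit_elem (A : comNzRingType) (p : A -> Prop) (J : A -> Prop) :
  is_prime_ideal p -> ext_loc_unit p J -> exists a, J a /\ ~ p a.
Proof.
move=> hp [k [c [j [Hc [Hj [u [pu e]]]]]]].
apply: NNPP => H.
have Hjp : forall i, p (j i) by move=> i; apply: NNPP => h; apply: H; exists (j i).
set F := fun i => fr_scale (c i) ((j i : A^o), 1).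
have HF : forall i, ~ p (F i).2 by move=> i; rewrite /F /= mulr1; apply: Hc.
have [h1 h2] := fr_sum_p hp HF.
have [[p0 pD pM] p1 _] := hp.
have : p (u * (\big[@fr_add A A^o/fr_zero A^o]_(i < k) F i).1).
  by apply: (pM); apply: h2 => i; rewrite /F /=; apply: (pM).
move: e; rewrite /= mulr1 => /eqP; rewrite subr_eq0 => /eqP e.
have e2 : u * (\big[@fr_add A A^o/fr_zero A^o]_(i < k) F i).1 =
  (u * (\big[@fr_add A A^o/fr_zero A^o]_(i < k) F i).2) * 1 := esym e.
by rewrite e2 mulr1; apply: primeM.
Qed.


Lemma dir_ba (A : comNzRingType) (n : nat) (le : rel 'X_{1..n})
    (I : {mpoly A[n]} -> Prop) (p : A -> Prop) :
  monomial_order le -> is_ideal I -> is_prime_ideal p ->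
  (forall i : 'I_n, ext_loc_unit p (initial_coef_ideal_inf le I i)) ->
  loc_fin_gen p I.
Proof.
move=> mo hI hp H.
have H1 : forall i : 'I_n, exists kc : nat * A, ~ p kc.2 /\
    initial_ideal le I (kc.2 *: 'X_[U_(i) *+ kc.1.+1]).
  move=> i; have [a [[k Ha] pa]] := ext_loc_unit_elem hp (H i).
  by exists (k, a).
have [kc Hkc] := fchoice H1.
have H2 : forall i : 'I_n, exists g, [/\ I g,
   g@_(U_(i) *+ (kc i).1.+1)%MM = ((kc i).2 *: 'X_[(U_(i) *+ (kc i).1.+1)%MM])@_(U_(i) *+ (kc i).1.+1)%MM &
   bnd le (U_(i) *+ (kc i).1.+1)%MM g].
  by move=> i; apply: coef_initial => //; case: (Hkc i).
have [g Hg] := fchoice H2.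
have HG := @Good_all A n le I p (fun i => (kc i).1.+1) (fun i => (kc i).2) g mo hI hp.
have {}HG : forall v, Good I p (\sum_j (kc j).1.+1).+1 v.
  apply: HG => j; have [g1 g2 g3] := Hg j; split => //.
    by rewrite g2 mcoeffZ mcoeffX eqxx mulr1.
  by case: (Hkc j).
set d := (\sum_j (kc j).1.+1).+1 in HG.
exists #|{: 'X_{1..n < d}}|.
exists (fun l => ('X_[(enum_val l : 'X_{1..n < d})], 1)); split.
  by move=> l /=; case: hp.
case=> v s /= ps.
have [u [pu [w [sw Iw]]]] := HG v.
exists (fun l => (w@_(enum_val l : 'X_{1..n < d}), u * s)); split.
  by move=> l /=; apply: primeM.
rewrite fr_sum_const /fr_eq /=.
have k0 : (0 < #|{: 'X_{1..n < d}}|)%N.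
  by apply/card_gt0P; exists (@bm0 n (\sum_j (kc j).1.+1)).
have ew : \sum_(i < #|{: 'X_{1..n < d}}|) w@_(enum_val i : 'X_{1..n < d}) *: 'X_[(enum_val i : 'X_{1..n < d})] = w.
  rewrite [RHS](mpolywE sw) -(big_enum_val (fun m : 'X_{1..n < d} => w@_m *: 'X_[m])) /=. by apply: eq_bigl => m; rewrite inE.
exists 1; split; first by case: hp.
rewrite ew !mul1r.
case: #|{: 'X_{1..n < d}}| k0 => // k _ /=.
have -> : (u * s) ^+ k.+1 *: v - s *: ((u * s) ^+ k *: w) =
  ((u * s) ^+ k * s) *: (u *: v - w).
  by rewrite scalerBr !scalerA exprSr [s * _]mulrC -mulrA [s * u]mulrC.
exact: idealZ.
Qed.


Lemma bigsum_comb (A : comNzRingType) (V : lmodType A) (p : A -> Prop) k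
  (cc : 'I_k -> A * A) (gg : 'I_k -> V * A) :
  is_prime_ideal p -> (forall i, ~ p (cc i).2) -> (forall i, ~ p (gg i).2) ->
  exists b : 'I_k -> A,
    (\big[@fr_add A V/fr_zero V]_(i < k) fr_scale (cc i) (gg i)).1 = \sum_i b i *: (gg i).1 /\
    ~ p (\big[@fr_add A V/fr_zero V]_(i < k) fr_scale (cc i) (gg i)).2.
Proof.
move=> hp; elim: k cc gg => [|k IH] cc gg Hc Hg.
  by exists (fun _ => 0); rewrite !big_ord0 /=; split => //; case: hp.
have [b [e1 e2]] := IH (fun i => cc (lift ord0 i)) (fun i => gg (lift ord0 i)) (fun i => Hc _) (fun i => Hg _).
set rest := \big[@fr_add A V/fr_zero V]_(i < k) fr_scale (cc (lift ord0 i)) (gg (lift ord0 i)).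
exists (fun i : 'I_k.+1 => if unlift ord0 i is Some j then ((cc ord0).2 * (gg ord0).2) * b j
                          else rest.2 * (cc ord0).1).
rewrite big_ord_recl -/rest /fr_add /fr_scale /=; split.
  rewrite big_ord_recl unlift_none e1 scaler_sumr scalerA; congr (_ + _).
  by apply: eq_bigr => j _; rewrite liftK scalerA.
by apply: primeM => //; apply: primeM.
Qed.

Lemma loc_rel (A : comNzRingType) n (I : {mpoly A[n]} -> Prop) (p : A -> Prop) k
  (gg : 'I_k -> {mpoly A[n]} * A) :
  is_ideal I -> is_prime_ideal p -> (forall i, ~ p (gg i).2) ->
  (forall x : {mpoly A[n]} * A, ~ p x.2 ->
      exists c : 'I_k -> A * A, (forall i, ~ p (c i).2) /\
        fr_eq p I x (\big[@fr_add A {mpoly A[n]}/fr_zero {mpoly A[n]}]_(i < k) fr_scale (c i) (gg i))) ->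
  forall w, exists e, ~ p e /\ exists b : 'I_k -> A, I (e *: w - \sum_l b l *: (gg l).1).
Proof.
move=> hI hp Hg Hgen w.
have [c [Hc [u [pu Iu]]]] := Hgen (w, 1) ltac:(by case: hp).
have [b [e1 e2]] := bigsum_comb hp Hc Hg.
exists (u * (\big[@fr_add A {mpoly A[n]}/fr_zero {mpoly A[n]}]_(i < k) fr_scale (c i) (gg i)).2); split.
  exact: primeM.
exists (fun l => u * b l); move: Iu; rewrite /= e1 mulr1 scaler_sumr.
suff -> : \sum_i u *: (b i *: (gg i).1) = \sum_l (u * b l) *: (gg l).1 by [].
by apply: eq_bigr => i _; rewrite scalerA.
Qed.


Lemma det_trick (R : comNzRingType) (J : R -> Prop) k (M : 'M[R]_k) (v : 'I_k -> R) :
  is_ideal J -> (forall j, J (\sum_l M j l * v l)) -> forall l, J (\det M * v l).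
Proof.
move=> hJ H l.
pose V : 'cV[R]_k := \col_l v l.
have -> : \det M * v l = ((\det M)%:M *m V) l ord0 by rewrite mul_scalar_mx !mxE.
rewrite -mul_adj_mx -mulmxA mxE; apply: ideal_sum => // j _; apply: idealM => //.
by rewrite mxE; under eq_bigr do rewrite mxE.
Qed.

Lemma mnmMn_inj n (i : 'I_n) a b : (U_(i) *+ a)%MM = (U_(i) *+ b)%MM -> a = b.
Proof.
by move/(congr1 (fun m : 'X_{1..n} => m i)); rewrite !mulmnE mnm1E eqxx !mul1n.
Qed.

Lemma ext_unit_of (A : comNzRingType) (p : A -> Prop) (J : A -> Prop) a :
  is_prime_ideal p -> J a -> ~ p a -> ext_loc_unit p J.
Proof.
move=> hp Ja pa; exists 1%N, (fun _ => (1, a)), (fun _ => a); split => //; split => //.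
exists 1; split; first by case: hp.
rewrite big_ord_recl big_ord0 /fr_add /fr_scale /fr_zero /=.
rewrite !mulr1 !mul1r !scale1r scaler0 addr0; apply/eqP; by rewrite subr_eq0 -[a%:A]/(a * 1) mulr1.
Qed.


Lemma charpoly_step (A : comNzRingType) n (le : rel 'X_{1..n}) (I : {mpoly A[n]} -> Prop)
  (p : A -> Prop) (i : 'I_n) k (Bm : 'M[A]_k) (e e0 : A) :
  monomial_order le -> is_ideal I -> is_prime_ideal p -> ~ p e -> ~ p e0 ->
  I (e0 *: (map_poly (@mpolyC n A) (char_poly Bm)).[e *: 'X_i]) ->
  ext_loc_unit p (initial_coef_ideal_inf le I i).
Proof.
move=> mo hI hp pe pe0 HI.
set chi := char_poly Bm.
have szchi : size chi = k.+1 by rewrite size_char_poly.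
have lchi : chi`_k = 1.
  by have /monicP := char_poly_monic Bm; rewrite lead_coefE szchi.
have szm : (size (map_poly (@mpolyC n A) chi) <= k.+1)%N.
  by rewrite size_map_poly_id0 ?szchi // lead_coefE szchi /= lchi mpolyC1 oner_neq0.
pose a (m : 'I_k.+1) := e0 * chi`_m * e ^+ m.
set G := 'X_i * (e0 *: (map_poly (@mpolyC n A) chi).[e *: 'X_i]).
have eG : G = \sum_(m < k.+1) a m *: 'X_[U_(i) *+ m.+1].
  rewrite /G (horner_coef_wide _ szm) scaler_sumr mulr_sumr; apply: eq_bigr => m _.
  rewrite coef_map /= exprZn mpolyXn mul_mpolyC scalerA -scalerAr -scalerAr scalerA.
  by rewrite -mpolyXD -mulmS /a.
have IG : I G by apply: idealM.
have cG : forall F, G@_F = \sum_(m < k.+1) a m * ((U_(i) *+ m.+1)%MM == F)%:R.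
  by move=> F; rewrite eG raddf_sum /=; apply: eq_bigr => m _; rewrite mcoeffZ mcoeffX.
set E := (U_(i) *+ k.+1)%MM.
have GE : G@_E = a ord_max.
  rewrite cG (bigD1 ord_max) //= eqxx mulr1 big1 ?addr0 // => m hm.
  case: eqP => [/mnmMn_inj [] em|_]; last by rewrite mulr0.
  by move: hm; rewrite -val_eqE /= em eqxx.
have pa : ~ p (a ord_max).
  by rewrite /a /= lchi mulr1; apply: primeM => //; apply: primeX.
have suppG : forall F, F \in msupp G -> le F E.
  move=> F; rewrite mcoeff_msupp cG => hF.
  have [m em] : exists m : 'I_k.+1, (U_(i) *+ m.+1)%MM = F.
    apply: NNPP => H; move: hF; rewrite big1 ?eqxx // => m _.
    by case: eqP => [em|_]; [exfalso; apply: H; exists m | rewrite mulr0].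
  rewrite -em; apply: (mo_lem mo); apply/mnm_lepP => c; rewrite !mulmnE.
  by apply: leq_mul => //; have := ltn_ord m.
apply: (ext_unit_of (a := G@_E)) => //; last by rewrite GE.
exists k; rewrite /coef_ideal.
exists 1%N, (fun _ => 1), (fun _ => G@_E *: 'X_[E]); split.
  move=> _; exists G; split => //; split.
    apply/negP => /eqP G0; apply: pa; rewrite -GE G0 mcoeff0.
    by case: hp => [[]].
  exists E; split => //; split => //.
  rewrite mcoeff_msupp GE; exact: prime_neq0 hp _ pa.
by rewrite big_ord_recl big_ord0 addr0 mul1r.
Qed.


Lemma dir_ab (A : comNzRingType) (n : nat) (le : rel 'X_{1..n})
    (I : {mpoly A[n]} -> Prop) (p : A -> Prop) :
  monomial_order le -> is_ideal I -> is_prime_ideal p ->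
  loc_fin_gen p I ->
  (forall i : 'I_n, ext_loc_unit p (initial_coef_ideal_inf le I i)).
Proof.
move=> mo hI hp [k [gg [Hg Hgen]]] i.
have Hrel := loc_rel hI hp Hg Hgen.
set v := fun l => (gg l).1.
have [eB HeB] := fchoice (fun j => Hrel ('X_i * v j)).
have [e0 [pe0 [beta Ibeta]]] := Hrel 1.
have HeB' : forall j, exists b : 'I_k -> A, I ((eB j) *: ('X_i * v j) - \sum_l b l *: v l).
  by move=> j; case: (HeB j) => _ [b Hb]; exists b.
have [B HB] := fchoice HeB'.
set e := \prod_j eB j.
have pe : ~ p e by apply: prime_prod => // j; case: (HeB j).
pose Ej (j : 'I_k) := \prod_(l < k | l != j) eB l.
pose B' j l := Ej j * B j l.
have HB' : forall j, I (e *: ('X_i * v j) - \sum_l B' j l *: v l).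
  move=> j; have -> : e = Ej j * eB j by rewrite /e (bigD1 j) //= mulrC.
  have := idealZ hI (Ej j) (HB j); rewrite scalerBr scalerA scaler_sumr.
  by under eq_bigr do rewrite scalerA.
pose Bm : 'M[A]_k := \matrix_(j, l) B' j l.
pose t : {mpoly A[n]} := e *: 'X_i.
pose M := map_mx (horner_eval t) (map_mx (map_poly (@mpolyC n A)) (char_poly_mx Bm)).
have ME : forall j l, M j l = t *+ (j == l) - (B' j l)%:MP.
  move=> j l; rewrite !mxE /= horner_evalE.
  by rewrite rmorphB rmorphMn /= map_polyX map_polyC hornerE hornerMn hornerX hornerN hornerC.
have IM : forall j, I (\sum_l M j l * v l).
  move=> j; have -> : \sum_l M j l * v l = e *: ('X_i * v j) - \sum_l B' j l *: v l.
    under eq_bigr do rewrite ME mulrBl mul_mpolyC.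
    rewrite sumrB; congr (_ - _).
    rewrite (bigD1 j) //= eqxx mulr1n big1 ?addr0; first by rewrite /t scalerAl.
    by move=> l /negbTE; rewrite eq_sym => ->; rewrite mulr0n mul0r.
  exact: HB'.
have Idet := det_trick hI IM.
have Ie0 : I (e0 *: \det M).
  have -> : e0 *: \det M = \det M * (e0%:A - \sum_l beta l *: (gg l).1) +
      \sum_l beta l *: (\det M * v l).
    rewrite mulrBr mulr_sumr -addrA [X in _ + X]addrC.
    under eq_bigr do rewrite scalerAr.
    by rewrite subrr addr0 mulr_algr.
  apply: idealD; [exact: hI | exact: idealM | ].
  by apply: ideal_sum => // l _; apply: idealZ.
apply: (charpoly_step (Bm := Bm) (e := e) (e0 := e0)) => //.
by rewrite /M !det_map_mx /= horner_evalE in Ie0.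
Qed.

Theorem proposition5p3 (A : comNzRingType) (n : nat) (le : rel 'X_{1..n})
    (I : {mpoly A[n]} -> Prop) (p : A -> Prop) :
  noetherian A -> monomial_order le -> is_ideal I -> is_prime_ideal p ->
  (loc_fin_gen p I <->
   (forall i : 'I_n, ext_loc_unit p (initial_coef_ideal_inf le I i))).
Proof.
move=> _ mo hI hp; split; first exact: dir_ab.
exact: dir_ba.
Qed.
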